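(* Let $A:\mathbb{N}\to\mathbb{Z}$ and $B:\mathbb{N}\to\mathbb{Z}_{>0}$ be primitive recursive functions, and let $q_n = A(n)/B(n)$. Suppose there is a primitive recursive function $C:\mathbb{N}\to\mathbb{N}$ (a Cauchy modulus of convergence) such that for every $e\in\mathbb{N}$ and all $i,j\ge C(e)$ we have $|q_i-q_j|<2^{-e}$. Then there exist an integer $I$ and a primitive recursive function $P:\mathbb{Z}^+\to\{-1,0,1\}$ such that $$I+\sum_{i=1}^{\infty}P(i)\,2^{-i}=\lim_{n\to\infty} q_n,$$ i.e. the limit of $(q_n)$ is the value of a Signed Primitive Recursive Computed Number.
   Context: A Signed Primitive Recursive Computed Number (SPRCN) is a pair $(I,P)$ where $I\in\mathbb{Z}$ and $P:\mathbb{Z}^+\to\{-1,0,1\}$ is a primitive recursive function; it represents the rational sequence $\left(I+\sum_{i=1}^n P(i)2^{-i}\right)_n$, whose limit $I+\sum_{i=1}^\infty P(i)2^{-i}$ is called the value (or limit) of the SPRCN. *)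

(* Defs.v *)
From Stdlib Require Import Reals ZArith Arith.

(* Syntax of primitive recursive functions, indexed by arity.
   An argument vector of arity n is represented by a function nat -> nat of
   which only the entries 0..n-1 are ever read. *)
Inductive PrimRec : nat -> Type :=
| PR_zero (n : nat) : PrimRec n
| PR_succ : PrimRec 1
| PR_proj (n i : nat) (H : i < n) : PrimRec n
| PR_comp (n m : nat) (g : PrimRec m) (fs : nat -> PrimRec n) : PrimRec n
| PR_rec (n : nat) (g : PrimRec n) (h : PrimRec (S (S n))) : PrimRec (S n).
    (* primitive recursion:  f(0,x) = g(x), f(y+1,x) = h(y, f(y,x), x) *)

Definition vcons (x : nat) (v : nat -> nat) : nat -> nat :=
  fun i => match i with 0 => x | S j => v j end.

Fixpoint pr_eval {n : nat} (f : PrimRec n) : (nat -> nat) -> nat :=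
  match f with
  | PR_zero _ => fun _ => 0
  | PR_succ => fun v => S (v 0)
  | PR_proj _ i _ => fun v => v i
  | PR_comp _ m g fs => fun v => pr_eval g (fun k => pr_eval (fs k) v)
  | PR_rec _ g h => fun v =>
      nat_rect (fun _ => nat) (pr_eval g (fun i => v (S i)))
        (fun y r => pr_eval h (vcons y (vcons r (fun i => v (S i))))) (v 0)
  end.

Definition prim_rec_nat (F : nat -> nat) : Prop :=
  exists f : PrimRec 1, forall n, F n = pr_eval f (fun _ => n).

Definition prim_rec_Z (F : nat -> Z) : Prop :=
  prim_rec_nat (fun n => Z.abs_nat (F n)) /\
  prim_rec_nat (fun n => if Z.ltb (F n) 0 then 1 else 0).

(* Main.v *)
Require Import Defs.
From Stdlib Require Import Reals ZArith Arith Lia Lra.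


Definition PRF n (g : (nat->nat)->nat) := exists t : PrimRec n, forall v, g v = pr_eval t v.

Lemma prf_ext n g g' : (forall v, g v = g' v) -> PRF n g -> PRF n g'.
Proof. intros E [t Ht]; exists t; intro v; rewrite <- E; auto. Qed.

Lemma prf_proj n i : i < n -> PRF n (fun v => v i).
Proof. intro H; exists (PR_proj n i H); reflexivity. Qed.

Lemma prf_zero n : PRF n (fun _ => 0).
Proof. exists (PR_zero n); reflexivity. Qed.

Lemma prf_succ n g : PRF n g -> PRF n (fun v => S (g v)).
Proof. intros [t Ht]; exists (PR_comp n 1 PR_succ (fun _ => t)); intro v; simpl; rewrite Ht; reflexivity. Qed.

Lemma prf_comp1 n F g : PRF 1 (fun w => F (w 0)) -> PRF n g -> PRF n (fun v => F (g v)).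
Proof. intros [f Hf] [t Ht]; exists (PR_comp n 1 f (fun _ => t)); intro v; simpl.
  rewrite <- Hf; rewrite Ht; reflexivity. Qed.

Lemma prf_nat F : prim_rec_nat F -> PRF 1 (fun w => F (w 0)).
Proof. intros [f Hf]. assert (H : 0 < 1) by lia.
  exists (PR_comp 1 1 f (fun _ => PR_proj 1 0 H)); intro v; simpl. apply Hf. Qed.

Lemma prf_comp2 n h g1 g2 : PRF 2 (fun w => h (w 0) (w 1)) -> PRF n g1 -> PRF n g2 ->
  PRF n (fun v => h (g1 v) (g2 v)).
Proof. intros [f Hf] [t1 H1] [t2 H2].
  exists (PR_comp n 2 f (fun k => match k with 0 => t1 | _ => t2 end)); intro v; simpl.
  rewrite <- Hf; simpl; rewrite H1, H2; reflexivity. Qed.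

Lemma prf_rec G H : PRF 1 (fun w => G (w 0)) -> PRF 3 (fun w => H (w 0) (w 1) (w 2)) ->
  PRF 2 (fun w => nat_rect (fun _ => nat) (G (w 1)) (fun y r => H y r (w 1)) (w 0)).
Proof. intros [g Hg] [h Hh]. exists (PR_rec 1 g h); intro v; simpl.
  induction (v 0); simpl.
  - apply (Hg (fun i => v (S i))).
  - rewrite IHn. apply (Hh (vcons n (vcons _ (fun i => v (S i))))). Qed.

Lemma prf_const n c : PRF n (fun _ => c).
Proof. induction c. apply prf_zero. apply (prf_succ _ _ IHc). Qed.

Lemma pr_add : PRF 2 (fun w => w 0 + w 1).
Proof.
  eapply prf_ext; [| apply (prf_rec (fun x => x) (fun y r x => S r))].
  - intro v; simpl; induction (v 0); simpl; congruence.
  - apply prf_proj; lia.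
  - apply prf_succ, prf_proj; lia.
Qed.

Lemma pr_mul : PRF 2 (fun w => w 0 * w 1).
Proof.
  eapply prf_ext; [| apply (prf_rec (fun x => 0) (fun y r x => r + x))].
  - intro v; simpl; induction (v 0); simpl; lia.
  - apply prf_zero.
  - apply (prf_comp2 3 Nat.add (fun w => w 1) (fun w => w 2)); [apply pr_add | apply prf_proj | apply prf_proj]; lia.
Qed.

Lemma pr_predr : PRF 2 (fun w => Nat.pred (w 0)).
Proof.
  eapply prf_ext; [| apply (prf_rec (fun x => 0) (fun y r x => y))].
  - intro v; simpl; destruct (v 0); reflexivity.
  - apply prf_zero.
  - apply prf_proj; lia.
Qed.

Lemma pr_pred : PRF 1 (fun w => Nat.pred (w 0)).
Proof.
  apply (prf_comp2 1 (fun a b => Nat.pred a) (fun w => w 0) (fun w => w 0)); [apply pr_predr | apply prf_proj | apply prf_proj]; lia.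
Qed.

Lemma pr_subr : PRF 2 (fun w => w 1 - w 0).
Proof.
  eapply prf_ext; [| apply (prf_rec (fun x => x) (fun y r x => Nat.pred r))].
  - intro v; simpl; induction (v 0); simpl. lia. rewrite IHn; lia.
  - apply prf_proj; lia.
  - apply (prf_comp1 3 Nat.pred (fun w => w 1)); [apply pr_pred | apply prf_proj; lia].
Qed.

Lemma pr_sub : PRF 2 (fun w => w 0 - w 1).
Proof.
  apply (prf_comp2 2 (fun a b => b - a) (fun w => w 1) (fun w => w 0)); [apply pr_subr | apply prf_proj | apply prf_proj]; lia.
Qed.

Lemma pr_pow2r : PRF 2 (fun w => 2 ^ (w 0)).
Proof.
  eapply prf_ext; [| apply (prf_rec (fun x => 1) (fun y r x => r + r))].
  - intro v; simpl; induction (v 0); simpl; lia.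
  - apply prf_const.
  - apply (prf_comp2 3 Nat.add (fun w => w 1) (fun w => w 1)); [apply pr_add | apply prf_proj | apply prf_proj]; lia.
Qed.

Lemma pr_pow2 : PRF 1 (fun w => 2 ^ (w 0)).
Proof.
  apply (prf_comp2 1 (fun a b => 2 ^ a) (fun w => w 0) (fun w => w 0)); [apply pr_pow2r | apply prf_proj | apply prf_proj]; lia.
Qed.

Lemma pr_sgr : PRF 2 (fun w => match w 0 with 0 => 0 | _ => 1 end).
Proof.
  eapply prf_ext; [| apply (prf_rec (fun x => 0) (fun y r x => 1))].
  - intro v; simpl; destruct (v 0); reflexivity.
  - apply prf_zero.
  - apply prf_const.
Qed.

Definition ltb01 a b := if Nat.ltb a b then 1 else 0.

Lemma pr_lt : PRF 2 (fun w => ltb01 (w 0) (w 1)).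
Proof.
  eapply prf_ext; [| apply (prf_comp2 2 (fun a b => match a with 0 => 0 | _ => 1 end) (fun w => w 1 - w 0) (fun w => w 0));
    [apply pr_sgr | apply (prf_comp2 2 (fun a b => a - b) (fun w => w 1) (fun w => w 0)); [apply pr_sub| apply prf_proj | apply prf_proj] | apply prf_proj]].
  - intro v; simpl. unfold ltb01. destruct (Nat.ltb_spec (v 0) (v 1)); destruct (v 1 - v 0) eqn:E; lia.
  - lia. - lia. - lia.
Qed.

Inductive ex : Type :=
| EVar (i : nat) | EConst (c : nat) | EAdd (a b : ex) | EMul (a b : ex) | ESub (a b : ex)
| EPow2 (a : ex) | ELt (a b : ex)
| EF (F : nat -> nat) (H : PRF 1 (fun w => F (w 0))) (a : ex)
| EF2 (F : nat -> nat -> nat) (H : PRF 2 (fun w => F (w 0) (w 1))) (a b : ex).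

Fixpoint ev (e : ex) (v : nat -> nat) : nat :=
  match e with
  | EVar i => v i | EConst c => c
  | EAdd a b => ev a v + ev b v | EMul a b => ev a v * ev b v
  | ESub a b => ev a v - ev b v | EPow2 a => 2 ^ ev a v
  | ELt a b => ltb01 (ev a v) (ev b v)
  | EF F _ a => F (ev a v) | EF2 F _ a b => F (ev a v) (ev b v)
  end.

Fixpoint okx (n : nat) (e : ex) : Prop :=
  match e with
  | EVar i => i < n | EConst _ => True
  | EAdd a b | EMul a b | ESub a b | ELt a b | EF2 _ _ a b => okx n a /\ okx n b
  | EPow2 a | EF _ _ a => okx n a
  end.

Lemma prf_ex n e : okx n e -> PRF n (ev e).
Proof.
  induction e; simpl; intro Hok.
  - apply prf_proj; auto.
  - apply prf_const.
  - apply (prf_comp2 n Nat.add (ev e1) (ev e2)); [apply pr_add | tauto | tauto].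
  - apply (prf_comp2 n Nat.mul (ev e1) (ev e2)); [apply pr_mul | tauto | tauto].
  - apply (prf_comp2 n Nat.sub (ev e1) (ev e2)); [apply pr_sub | tauto | tauto].
  - apply (prf_comp1 n (fun a => 2 ^ a) (ev e)); [apply pr_pow2 | tauto].
  - apply (prf_comp2 n ltb01 (ev e1) (ev e2)); [apply pr_lt | tauto | tauto].
  - apply (prf_comp1 n F (ev e)); [apply H | tauto].
  - apply (prf_comp2 n F (ev e1) (ev e2)); [apply H | tauto | tauto].
Qed.

Open Scope R_scope.

Lemma small_pow (eps : R) : 0 < eps -> exists e : nat, / 2 ^ e < eps.
Proof.
  intro He. destruct (pow_lt_1_zero (/2)) with (y := eps) as [N HN]; auto.
  rewrite Rabs_right; lra.
  exists N. specialize (HN N (le_n _)). rewrite Rabs_right in HN.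
  rewrite <- pow_inv; auto. apply Rle_ge, pow_le; lra.
Qed.

Lemma lim_bound (u : nat -> R) (l a c : R) (N : nat) : Un_cv u l ->
  (forall j, (N <= j)%nat -> Rabs (a - u j) < c) -> Rabs (a - l) <= c.
Proof.
  intros Hu Hb. destruct (Rle_or_lt (Rabs (a - l)) c) as [H|H]; auto.
  destruct (Hu (Rabs (a - l) - c)) as [N1 HN1]; [lra|].
  specialize (HN1 (max N N1) (Nat.le_max_r _ _)). specialize (Hb (max N N1) (Nat.le_max_l _ _)).
  unfold R_dist in HN1.
  assert (Rabs (a - l) <= Rabs (a - u (max N N1)) + Rabs (u (max N N1) - l)).
  { replace (a - l) with ((a - u (max N N1)) + (u (max N N1) - l)) by ring. apply Rabs_triang. }
  lra.
Qed.

Lemma init_KT (x : R) : exists K T0 : nat, x + INR K >= 1 /\ Rabs (x + INR K - INR T0) <= 1.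
Proof.
  destruct (archimed x) as [H1 H2]. set (z := up x) in *. clearbody z.
  exists (Z.abs_nat z + 2)%nat, (Z.abs_nat (z + Z.of_nat (Z.abs_nat z + 2)))%nat.
  assert (Ez : IZR z + IZR (Z.abs z) >= 0).
  { rewrite <- plus_IZR. apply Rle_ge, IZR_le. clear H1 H2. lia. }
  rewrite !INR_IZR_INZ. rewrite Nat2Z.inj_add. rewrite Nat2Z.inj_abs_nat.
  rewrite Zabs2Nat.id_abs. rewrite (Z.abs_eq (z + _)) by lia.
  rewrite !plus_IZR. split. simpl; lra.
  replace (x + (IZR (Z.abs z) + IZR (Z.of_nat 2)) - (IZR z + (IZR (Z.abs z) + IZR (Z.of_nat 2))))
    with (x - IZR z) by ring.
  rewrite Rabs_left1; lra.
Qed.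

Definition aA (A : nat -> Z) m := Z.abs_nat (A m).
Definition sA (A : nat -> Z) m := if Z.ltb (A m) 0 then 1%nat else 0%nat.
Definition Nf A B (K m : nat) : nat :=
  (sA A m * (K * B m - aA A m) + (1 - sA A m) * (aA A m + K * B m))%nat.
Definition ef A B C (K n T : nat) : nat :=
  (1 + ltb01 ((4 * T + 1) * B (C (n + 3))) (2 ^ (n + 2) * Nf A B K (C (n + 3)))
     - ltb01 (2 ^ (n + 2) * Nf A B K (C (n + 3)) + B (C (n + 3))) (4 * T * B (C (n + 3))))%nat.
Definition Tf A B C (K T0 : nat) (y : nat) : nat :=
  nat_rect (fun _ => nat) T0 (fun y r => 2 * r + ef A B C K y r - 1)%nat y.

Lemma Nf_val A B K m : (0 <= A m + Z.of_nat K * Z.of_nat (B m))%Z ->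
  Z.of_nat (Nf A B K m) = (A m + Z.of_nat K * Z.of_nat (B m))%Z.
Proof.
  intro H. unfold Nf, sA, aA. destruct (Z.ltb_spec (A m) 0); lia.
Qed.

Lemma ef_le A B C K n T : (ef A B C K n T <= 2)%nat.
Proof. unfold ef, ltb01. destruct (Nat.ltb _ _); destruct (Nat.ltb _ _); lia. Qed.

Lemma abs_le_iff u c : Rabs u <= c <-> -c <= u <= c.
Proof. split; intro H; [split_Rabs; lra | apply Rabs_le; lra]. Qed.

Lemma step A B C (K T0 : nat) (x : R) (hBpos : forall n, (0 < B n)%nat)
  (happrox : forall e i, (C e <= i)%nat -> Rabs (IZR (A i) / INR (B i) - x) <= / 2 ^ e)
  (hK : x + INR K >= 1) (n : nat) :
  Rabs ((x + INR K) * 2 ^ n - INR (Tf A B C K T0 n)) <= 1 ->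
  (1 <= 2 * Tf A B C K T0 n + ef A B C K n (Tf A B C K T0 n))%nat /\
  Rabs ((x + INR K) * 2 ^ (S n) - INR (Tf A B C K T0 (S n))) <= 1.
Proof.
  intro Hinv.
  assert (ETS : Tf A B C K T0 (S n) = (2 * Tf A B C K T0 n + ef A B C K n (Tf A B C K T0 n) - 1)%nat) by reflexivity.
  rewrite ETS. clear ETS.
  set (T := Tf A B C K T0 n) in *. clearbody T.
  set (m := C (n + 3)%nat).
  assert (hq := happrox (n + 3)%nat m (le_n _)).
  assert (bpos : 0 < INR (B m)) by (apply lt_0_INR, hBpos).
  set (a := IZR (A m)) in *. set (bb := INR (B m)) in *. set (q := a / bb) in *.
  set (P2 := 2 ^ n) in *.
  assert (P2ge : 1 <= P2) by (apply pow_R1_Rle; lra).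
  assert (E3 : 2 ^ (n + 3) = P2 * 8) by (unfold P2; rewrite pow_add; simpl; ring).
  rewrite E3 in hq.
  set (Y := (x + INR K) * P2) in *.
  set (Zv := (q + INR K) * P2).
  assert (HZY : Rabs (Zv - Y) <= / 8).
  { unfold Zv, Y. replace ((q + INR K) * P2 - (x + INR K) * P2) with ((q - x) * P2) by ring.
    rewrite Rabs_mult, (Rabs_right P2) by lra.
    apply (Rmult_le_compat_r P2) in hq; [|lra].
    replace (/ (P2 * 8) * P2) with (/8) in hq by (field; lra). exact hq. }
  assert (hq8 : Rabs (q - x) <= / 8).
  { apply Rle_trans with (/ (P2 * 8)); auto. apply Rinv_le_contravar; lra. }
  assert (Ea : a = q * bb) by (unfold q; field; lra).
  assert (Hpos : 0 < a + INR K * bb).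
  { rewrite Ea. replace (q * bb + INR K * bb) with ((q + INR K) * bb) by ring.
    apply Rmult_lt_0_compat; auto. apply abs_le_iff in hq8. lra. }
  assert (HZ : (0 <= A m + Z.of_nat K * Z.of_nat (B m))%Z).
  { apply le_IZR. rewrite plus_IZR, mult_IZR, <- !INR_IZR_INZ. fold a bb. lra. }
  assert (ENe : INR (Nf A B K m) = a + INR K * bb).
  { rewrite INR_IZR_INZ, Nf_val by exact HZ. rewrite plus_IZR, mult_IZR, <- !INR_IZR_INZ. reflexivity. }
  assert (P4 : INR (2 ^ (n + 2)) = 4 * P2).
  { rewrite pow_INR, pow_add. replace (INR 2) with 2 by (simpl; ring). unfold P2. ring. }
  assert (c1 : INR ((4 * T + 1) * B m) = (4 * INR T + 1) * bb).
  { rewrite mult_INR, plus_INR, mult_INR. simpl. fold bb. ring. }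
  assert (c2 : INR (2 ^ (n + 2) * Nf A B K m) = 4 * Zv * bb).
  { rewrite mult_INR, P4, ENe, Ea. unfold Zv. ring. }
  assert (c3 : INR (2 ^ (n + 2) * Nf A B K m + B m) = (4 * Zv + 1) * bb).
  { rewrite plus_INR, c2. fold bb. ring. }
  assert (c4 : INR (4 * T * B m) = 4 * INR T * bb).
  { rewrite !mult_INR. simpl. fold bb. ring. }
  apply abs_le_iff in HZY. apply abs_le_iff in Hinv.
  assert (YP : Y >= 1).
  { unfold Y. assert (x + INR K <= (x + INR K) * P2). 
    { rewrite <- (Rmult_1_r (x + INR K)) at 1. apply Rmult_le_compat_l; lra. } lra. }
  assert (Tnn : 0 <= INR T) by apply pos_INR.
  replace ((x + INR K) * 2 ^ S n) with (2 * Y) by (unfold Y, P2; simpl; ring).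
  unfold ef, ltb01. fold m.
  destruct (Nat.ltb_spec ((4 * T + 1) * B m) (2 ^ (n + 2) * Nf A B K m)) as [h1|h1];
  destruct (Nat.ltb_spec (2 ^ (n + 2) * Nf A B K m + B m) (4 * T * B m)) as [h2|h2].
  - apply lt_INR in h1, h2. rewrite c1, c2 in h1. rewrite c3, c4 in h2.
    apply Rmult_lt_reg_r in h1, h2; auto. lra.
  - apply lt_INR in h1. apply le_INR in h2. rewrite c1, c2 in h1. rewrite c3, c4 in h2.
    apply Rmult_lt_reg_r in h1; auto. apply Rmult_le_reg_r in h2; auto.
    split. lia. replace (2 * T + (1 + 1 - 0) - 1)%nat with (2 * T + 1)%nat by lia.
    apply abs_le_iff. rewrite plus_INR, mult_INR. simpl. lra.
  - apply le_INR in h1. apply lt_INR in h2. rewrite c1, c2 in h1. rewrite c3, c4 in h2.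
    apply Rmult_le_reg_r in h1; auto. apply Rmult_lt_reg_r in h2; auto.
    assert (Tpos : (0 < T)%nat) by (apply INR_lt; simpl; lra).
    split. lia. replace (2 * T + (1 + 0 - 1) - 1)%nat with (2 * T - 1)%nat by lia.
    apply abs_le_iff. rewrite minus_INR by lia. rewrite mult_INR. simpl. lra.
  - apply le_INR in h1, h2. rewrite c1, c2 in h1. rewrite c3, c4 in h2.
    apply Rmult_le_reg_r in h1, h2; auto.
    split. lia. replace (2 * T + (1 + 0 - 0) - 1)%nat with (2 * T)%nat by lia.
    apply abs_le_iff. rewrite mult_INR. simpl. lra.
Qed.
Open Scope nat_scope.

Lemma prf_to_nat F F' : (forall n, F n = F' n) -> PRF 1 (fun w => F' (w 0)) -> prim_rec_nat F.
Proof. intros E [t Ht]; exists t; intro n; rewrite E; apply (Ht (fun _ => n)). Qed.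

Lemma pr_ef A B C K (hA : prim_rec_Z A) (hB : prim_rec_nat B) (hC : prim_rec_nat C) :
  PRF 2 (fun w => ef A B C K (w 0) (w 1)).
Proof.
  pose (HC := prf_nat C hC). pose (HB := prf_nat B hB).
  pose (HA := prf_nat (aA A) (proj1 hA)). pose (HS := prf_nat (sA A) (proj2 hA)).
  pose (mE := EF C HC (EAdd (EVar 0) (EConst 3))).
  pose (bE := EF B HB mE).
  pose (NE := EAdd (EMul (EF (sA A) HS mE) (ESub (EMul (EConst K) bE) (EF (aA A) HA mE)))
                   (EMul (ESub (EConst 1) (EF (sA A) HS mE)) (EAdd (EF (aA A) HA mE) (EMul (EConst K) bE)))).
  pose (p := EPow2 (EAdd (EVar 0) (EConst 2))).
  pose (e := ESub (EAdd (EConst 1) (ELt (EMul (EAdd (EMul (EConst 4) (EVar 1)) (EConst 1)) bE) (EMul p NE)))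
                  (ELt (EAdd (EMul p NE) bE) (EMul (EMul (EConst 4) (EVar 1)) bE))).
  apply (prf_ext 2 (ev e)).
  - intro v. reflexivity.
  - apply prf_ex. simpl. repeat split; lia.
Qed.

Lemma pr_Ef A B C K T0 (hA : prim_rec_Z A) (hB : prim_rec_nat B) (hC : prim_rec_nat C) :
  PRF 1 (fun w => ef A B C K (w 0) (Tf A B C K T0 (w 0))).
Proof.
  pose (Hef := pr_ef A B C K hA hB hC).
  assert (HT : PRF 2 (fun w => (fun y (_ : nat) => Tf A B C K T0 y) (w 0) (w 1))).
  { eapply prf_ext; [| apply (prf_rec (fun _ => T0) (fun y r x => 2 * r + ef A B C K y r - 1)%nat)].
    - intro v. reflexivity.
    - apply prf_const.
    - apply (prf_ext 3 (ev (ESub (EAdd (EMul (EConst 2) (EVar 1)) (EF2 (ef A B C K) Hef (EVar 0) (EVar 1))) (EConst 1)))).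
      + intro v; reflexivity.
      + apply prf_ex. simpl. repeat split; lia. }
  apply (prf_ext 1 (ev (EF2 (ef A B C K) Hef (EVar 0) (EF2 _ HT (EVar 0) (EVar 0))))).
  - intro v; reflexivity.
  - apply prf_ex. simpl. repeat split; lia.
Qed.

Open Scope R_scope.

Theorem theorem1 (A : nat -> Z) (B : nat -> nat) (C : nat -> nat)
  (hA : prim_rec_Z A) (hB : prim_rec_nat B) (hBpos : forall n, (0 < B n)%nat)
  (hC : prim_rec_nat C)
  (hCauchy : forall (e i j : nat), (C e <= i)%nat -> (C e <= j)%nat ->
     Rabs (IZR (A i) / INR (B i) - IZR (A j) / INR (B j)) < / 2 ^ e) :
  exists (I : Z) (P : nat -> Z),
    prim_rec_Z P /\
    (forall i, P i = (-1)%Z \/ P i = 0%Z \/ P i = 1%Z) /\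
    exists L : R,
      Un_cv (fun n => IZR I + sum_f_R0 (fun k => IZR (P (S k)) / 2 ^ (S k)) n) L /\
      Un_cv (fun n => IZR (A n) / INR (B n)) L.
Proof.
  assert (Hcc : Cauchy_crit (fun n => IZR (A n) / INR (B n))).
  { intros eps Heps. destruct (small_pow eps Heps) as [e He]. exists (C e).
    intros i j Hi Hj. unfold R_dist. specialize (hCauchy e i j Hi Hj). lra. }
  destruct (R_complete _ Hcc) as [x Hx].
  assert (happrox : forall e i, (C e <= i)%nat -> Rabs (IZR (A i) / INR (B i) - x) <= / 2 ^ e).
  { intros e i Hi. apply (lim_bound _ _ _ _ (C e) Hx). intros j Hj. apply hCauchy; auto. }
  destruct (init_KT x) as [K [T0 [hK hT0]]].
  set (Tn := Tf A B C K T0).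
  assert (Inv : forall n, Rabs ((x + INR K) * 2 ^ n - INR (Tn n)) <= 1).
  { induction n.
    - simpl. replace ((x + INR K) * 1) with (x + INR K) by ring. exact hT0.
    - apply (step A B C K T0 x hBpos happrox hK n IHn). }
  assert (Rel : forall k, INR (Tn (S k)) = 2 * INR (Tn k) + INR (ef A B C K k (Tn k)) - 1).
  { intro k. destruct (step A B C K T0 x hBpos happrox hK k (Inv k)) as [H1 _].
    change (Tn (S k)) with (2 * Tn k + ef A B C K k (Tn k) - 1)%nat.
    rewrite minus_INR by exact H1. rewrite plus_INR, mult_INR. simpl. ring. }
  set (P := fun i => (Z.of_nat (ef A B C K (i - 1)%nat (Tn (i - 1)%nat)) - 1)%Z).
  exists (Z.of_nat T0 - Z.of_nat K)%Z, P.
  split; [|split].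
  - split.
    + apply (prf_to_nat _ (fun i => (ef A B C K (i - 1) (Tn (i - 1)) - 1) + (1 - ef A B C K (i - 1) (Tn (i - 1))))%nat).
      * intro n. unfold P. lia.
      * pose (HE := pr_Ef A B C K T0 hA hB hC).
        apply (prf_ext 1 (ev (EAdd (ESub (EF (fun n => ef A B C K n (Tf A B C K T0 n)) HE (ESub (EVar 0) (EConst 1))) (EConst 1))
                                    (ESub (EConst 1) (EF (fun n => ef A B C K n (Tf A B C K T0 n)) HE (ESub (EVar 0) (EConst 1))))))).
        -- intro v; reflexivity.
        -- apply prf_ex. simpl. repeat split; lia.
    + apply (prf_to_nat _ (fun i => (1 - ef A B C K (i - 1) (Tn (i - 1))))%nat).
      * intro n. unfold P. destruct (Z.ltb_spec (Z.of_nat (ef A B C K (n - 1)%nat (Tn (n - 1)%nat)) - 1) 0); lia.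
      * pose (HE := pr_Ef A B C K T0 hA hB hC).
        apply (prf_ext 1 (ev (ESub (EConst 1) (EF (fun n => ef A B C K n (Tf A B C K T0 n)) HE (ESub (EVar 0) (EConst 1)))))).
        -- intro v; reflexivity.
        -- apply prf_ex. simpl. repeat split; lia.
  - intro i. unfold P. pose proof (ef_le A B C K (i - 1)%nat (Tn (i - 1)%nat)). lia.
  - exists x. split; [|exact Hx].
    assert (Sum : forall n, IZR (Z.of_nat T0 - Z.of_nat K) + sum_f_R0 (fun k => IZR (P (S k)) / 2 ^ (S k)) n
                   = INR (Tn (S n)) / 2 ^ (S n) - INR K).
    { assert (HP : forall k, IZR (P (S k)) = INR (Tn (S k)) - 2 * INR (Tn k)).
      { intro k. unfold P. replace (S k - 1)%nat with k by lia.
        rewrite minus_IZR, <- INR_IZR_INZ, Rel. ring. }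
      induction n.
      - simpl sum_f_R0. rewrite HP, minus_IZR, <- !INR_IZR_INZ.
        change (Tn 0%nat) with T0. field.
      - rewrite tech5, <- Rplus_assoc, IHn, HP.
        assert (0 < 2 ^ S n) by (apply pow_lt; lra).
        replace (2 ^ S (S n)) with (2 * 2 ^ S n) by (simpl; ring). field. lra. }
    intros eps Heps. destruct (small_pow eps Heps) as [e He]. exists e. intros n Hn.
    unfold R_dist. rewrite Sum.
    assert (Hp : 0 < 2 ^ S n) by (apply pow_lt; lra).
    replace (INR (Tn (S n)) / 2 ^ S n - INR K - x) with
      ((INR (Tn (S n)) - (x + INR K) * 2 ^ S n) * / 2 ^ S n) by (field; lra).
    rewrite Rabs_mult, Rabs_minus_sym, (Rabs_right (/ 2 ^ S n)) by (apply Rle_ge, Rlt_le, Rinv_0_lt_compat; lra).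
    apply Rle_lt_trans with (1 * / 2 ^ S n).
    + apply Rmult_le_compat_r; [apply Rlt_le, Rinv_0_lt_compat; lra | apply Inv].
    + rewrite Rmult_1_l. apply Rle_lt_trans with (/ 2 ^ e); auto.
      apply Rinv_le_contravar; [apply pow_lt; lra|]. apply Rle_pow; [lra | lia].
Qed.
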